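(* Let $a<b$ be real numbers and let $0<\alpha,\beta\leq 1$ with $1<\alpha+\beta\leq 2$. Define $G:[a,b]\times[a,b]\to\mathbb{R}$ by $$G(t,r)=\begin{cases}\dfrac{1}{\Gamma(\alpha)\Gamma(\beta)}\displaystyle\int_a^r (t-s)^{\beta-1}(r-s)^{\alpha-1}\,ds, & a\leq r\leq t\leq b,\\[0.3cm] \dfrac{1}{\Gamma(\alpha)\Gamma(\beta)}\displaystyle\int_a^t (t-s)^{\beta-1}(r-s)^{\alpha-1}\,ds, & a\leq t\leq r\leq b.\end{cases}$$ Then: (1) $G(t,r)\geq 0$ for all $a\leq r\leq t\leq b$; (2) $\max_{t\in[a,b]}G(t,r)=G(r,r)$ for all $r\in[a,b]$; (3) $\max_{r\in[a,b]}G(r,r)=\dfrac{(b-a)^{\alpha+\beta-1}}{(\alpha+\beta-1)\Gamma(\alpha)\Gamma(\beta)}$.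
   Context: $\Gamma$ denotes the Gamma function. *)

(* Defs.v *)
From HB Require Import structures.
From mathcomp Require Import all_boot all_order all_algebra.
From mathcomp Require Import all_classical all_reals all_analysis.
Set Implicit Arguments. Unset Strict Implicit. Unset Printing Implicit Defensive.
Import Order.TTheory GRing.Theory Num.Theory.
Local Open Scope classical_set_scope.
Local Open Scope ring_scope.

Definition Gamma {R : realType} (x : R) : R :=
  Rintegral (@lebesgue_measure R) `]0%R, +oo[
    (fun t : R => powR t (x - 1) * expR (- t)).

(* The kernel G(t,r) of the paper. The integrands are taken as (improper,
   absolutely convergent) Lebesgue integrals. *)
Definition Gker {R : realType} (a alpha beta : R) (t r : R) : R :=
  (Gamma alpha * Gamma beta)^-1 *
  (if r <= t then
     Rintegral (@lebesgue_measure R) `[a, r]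
       (fun s : R => powR (t - s) (beta - 1) * powR (r - s) (alpha - 1))
   else
     Rintegral (@lebesgue_measure R) `[a, t]
       (fun s : R => powR (t - s) (beta - 1) * powR (r - s) (alpha - 1))).

(* Main.v *)
Require Import Defs.
From HB Require Import structures.
From mathcomp Require Import all_boot all_order all_algebra.
From mathcomp Require Import all_classical all_reals all_analysis.
From mathcomp Require Import measurable_realfun ring lra.
Import Order.TTheory GRing.Theory Num.Theory.
Local Open Scope ring_scope.

Section K.
Local Open Scope classical_set_scope.

Variable R : realType.

Lemma dF (r p s : R) : s < r ->
  derivable (fun s => powR (r - s) p) s 1 /\
  (fun s => powR (r - s) p)^`() s = - (p * powR (r - s) (p-1)).
Proof.
move=> sr.
have h1 : derivable (fun s : R => r - s) s 1.
  by apply: derivableB; [exact: derivable_cst|exact: derivable_id].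
have h2 : derivable (fun x : R => powR x p) (r - s) 1.
  by apply: (@derivable_powR R 1 p); rewrite in_itv /= andbT subr_gt0.
have -> : (fun s => powR (r - s) p) = (fun x : R => powR x p) \o (fun s => r - s) by [].
split.
  by apply/derivable1_diffP; apply: differentiable_comp; apply/derivable1_diffP.
rewrite derive1_comp // powR_derive1 ?in_itv /= ?andbT ?subr_gt0 //.
rewrite derive1E deriveB // derive_cst derive_id /=.
by rewrite sub0r mulrN1.
Qed.

Lemma dF2 (r p s : R) : s < r ->
  derivable (fun s => powR (r - s) p * (- p^-1)) s 1.
Proof.
move=> sr; have [d _] := dF _ p _ sr.
by apply: (@derivableM _ _ (fun s => powR (r - s) p) (fun _ => - p^-1)) => //; exact: derivable_cst.
Qed.

Lemma contF (r p s : R) : s < r -> {for s, continuous (fun s => powR (r - s) p)}.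
Proof.
move=> sr; have [d _] := dF _ p _ sr.
by apply/differentiable_continuous/derivable1_diffP.
Qed.

Lemma piece (r p a c : R) : 0 < p -> a < c -> c < r ->
  (\int[lebesgue_measure]_(s in `[a, c]) (powR (r - s) (p - 1))%:E =
   ((powR (r - a) p - powR (r - c) p) / p)%:E)%E.
Proof.
move=> p0 ac cr.
pose F := fun s => powR (r - s) p * (- p^-1).
rewrite (@continuous_FTC2 R _ F a c ac).
- by rewrite /F -EFinB; congr EFin; rewrite !mulrN opprK addrC mulrBl.
- apply: derivable_within_continuous => s; rewrite in_itv /= => /andP[_ sc].
  by have [] := dF _ (p - 1) _ (le_lt_trans sc cr).
- split.
  + move=> s; rewrite in_itv /= => /andP[_ sc].
    exact: dF2 _ _ (lt_trans sc cr).
  + apply: cvg_at_right_filter.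
    apply/differentiable_continuous/derivable1_diffP; exact: dF2 _ _ (lt_trans ac cr).
  + apply: cvg_at_left_filter.
    apply/differentiable_continuous/derivable1_diffP; exact: dF2 _ _ cr.
- move=> s; rewrite in_itv /= => /andP[_ sc].
  have [d e] := dF _ p _ (lt_trans sc cr).
  rewrite /F derive1Mr // e mulNr mulrN opprK mulrAC divff ?mul1r //.
  by rewrite gt_eqF.
Qed.

Lemma key (r p a : R) : 0 < p -> a <= r ->
  (\int[lebesgue_measure]_(s in `[a, r]) (powR (r - s) (p - 1))%:E =
   (powR (r - a) p / p)%:E)%E.
Proof.
move=> p0; rewrite le_eqVlt => /predU1P[<-|ar].
  by rewrite set_itv1 integral_set1 subrr powR0 ?gt_eqF // mul0r.
pose f := fun s : R => powR (r - s) (p - 1).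
have mf : measurable_fun setT f.
  apply: (measurableT_comp (measurable_realfun.measurable_powR _)).
  exact: measurable_realfun.measurable_funB.
have mfE := (measurable_realfun.measurable_EFinP [set: R] f).2 mf.
have f0 : forall s, (0 <= (EFin \o f) s)%E by move=> s; rewrite lee_fin powR_ge0.
rewrite -integral_itv_bndo_bndc; last exact: measurable_funS mfE.
set D := [set` Interval (BLeft a) (BLeft r)].
have mD : measurable D by exact: measurable_itv.
apply/eqP; rewrite eq_le; apply/andP; split.
- pose c n := r - (r - a) / n.+2%:R.
  have hc n : (r - a) / n.+2%:R < r - a.
    by rewrite ltr_pdivrMr ?ltr0n // ltr_pMr ?subr_gt0 // ltr1n.
  have hc0 n : 0 < (r - a) / n.+2%:R by rewrite divr_gt0 ?subr_gt0 ?ltr0n.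
  have cr n : c n < r by rewrite /c; move: (hc0 n); set x := (r - a) / _; lra.
  have ac n : a < c n by rewrite /c; move: (hc n); set x := (r - a) / _; lra.
  have ndc : {homo c : m n / (m <= n)%N >-> m <= n}.
    move=> m n mn; rewrite /c lerD2l lerN2 ler_pM2l ?subr_gt0 //.
    by rewrite lef_pV2 ?posrE ?ltr0n // ler_nat.
  pose g n := (EFin \o f) \_ `[a, c n].
  have mg n : measurable_fun D (g n).
    apply: (measurable_funS measurableT (@subsetT _ D)).
    apply/(measurable_restrictT _ _).1; first exact: measurable_itv.
    exact: measurable_funS mfE.
  have g0 n x : D x -> (0 <= g n x)%E by move=> _; exact: erestrict_ge0.
  have ndg x : D x -> nondecreasing_seq (g^~ x).
    move=> _ m n mn; rewrite /g !patchE.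
    case: ifPn => [|_]; last by case: ifPn.
    rewrite inE /= in_itv /= => /andP[ax xc].
    by rewrite mem_set //= in_itv /= ax (le_trans xc (ndc _ _ mn)).
  have -> : (\int[lebesgue_measure]_(x in D) (EFin \o f) x =
             \int[lebesgue_measure]_(x in D) limn (g^~ x))%E.
    apply: eq_integral => x; rewrite /D inE /= in_itv /= => /andP[ax xr].
    apply/esym/lim_near_cst => //.
    near=> n.
    have hn : (r - a) / (r - x) <= n%:R by near: n; exact: nbhs_infty_ger.
    rewrite /g patchE mem_set //= in_itv /= ax /c.
    have rx : 0 < r - x by rewrite subr_gt0.
    have : (r - a) / n.+2%:R <= r - x.
      rewrite ler_pdivrMr ?ltr0n //.
      rewrite ler_pdivrMr // in hn.
      apply: (le_trans hn); rewrite mulrC ler_pM2l // ler_nat; exact: leq_trans (leqnSn n) (leqnSn _).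
    rewrite /=; set y := (r - a) / _; lra.
  have H := @cvg_monotone_convergence _ _ _ lebesgue_measure _ mD _ mg g0 ndg.
  rewrite -(cvg_lim _ H) //; apply: lime_le; first by apply/cvg_ex; eexists; exact: H.
  apply: nearW => n.
  rewrite -integral_mkcondr setIidr; last first.
    move=> x /=; rewrite /D /= !in_itv /= => /andP[-> xc] /=.
    exact: le_lt_trans xc (cr n).
  rewrite piece // lee_fin ler_wpM2r ?invr_ge0 ?ltW //.
  by rewrite ltrBlDr ltrDl powR_gt0 // subr_gt0.
- apply/lee_subgt0Pr => e e0.
  pose d := Num.min ((r - a) / 2) (powR (p * e) p^-1).
  have d0 : 0 < d by rewrite lt_min divr_gt0 ?subr_gt0 // powR_gt0 // mulr_gt0.
  have d1 : d <= (r - a) / 2 by rewrite ge_min lexx.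
  have d2 : d <= powR (p * e) p^-1 by rewrite ge_min lexx orbT.
  have ac : a < r - d by lra.
  have cr : r - d < r by lra.
  apply: (le_trans _ (@ge0_subset_integral _ _ _ lebesgue_measure `[a, r - d] D
     _ mD _ (measurable_funS _ _ mfE) (fun x _ => f0 x) _)) => //; last first.
    by move=> x /=; rewrite /D /= !in_itv /= => /andP[-> xc] /=; exact: le_lt_trans xc cr.
  rewrite piece // (_ : r - (r - d) = d); last by lra.
  rewrite -EFinB lee_fin.
  have hd : powR d p <= p * e.
    apply: (le_trans (ge0_ler_powR (ltW p0) _ _ d2)); rewrite ?nnegrE ?powR_ge0 //.
      exact: ltW.
    by rewrite -powRrM mulVf ?gt_eqF // powRr1 // ltW // mulr_gt0.
  by rewrite mulrBl lerD2l lerN2 ler_pdivrMr // mulrC.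
Unshelve. all: by end_near. Qed.

Lemma powR_anti (x y q : R) : 0 < x -> x <= y -> q <= 0 -> powR y q <= powR x q.
Proof.
move=> x0 xy q0; have y0 : 0 < y := lt_le_trans x0 xy.
have e z : powR z q = (powR z (- q))^-1 by rewrite -powRN opprK.
rewrite !e lef_pV2 ?posrE ?powR_gt0 //.
by apply: ge0_ler_powR; rewrite ?oppr_ge0 // nnegrE ltW.
Qed.

Lemma powR_mulD (x p q : R) : 0 < x -> powR x p * powR x q = powR x (p + q).
Proof. by move=> x0; rewrite powRD //; apply/implyP => _; rewrite gt_eqF. Qed.

Lemma mpow (u q : R) : measurable_fun setT (fun s : R => powR (u - s) q).
Proof.
apply: (measurableT_comp (measurable_realfun.measurable_powR _)).
exact: measurable_funB.
Qed.

Lemma cmpI (a u g : R) (h : R -> R) : 0 < g -> a <= u ->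
  measurable_fun setT h -> (forall s, 0 <= h s) ->
  (forall s, a <= s -> s < u -> h s <= powR (u - s) (g - 1)) ->
  \int[lebesgue_measure]_(s in `[a, u]) h s <= powR (u - a) g / g.
Proof.
move=> g0 au mh h0 hle.
have mhE := (measurable_EFinP [set: R] h).2 mh.
have mpE := (measurable_EFinP [set: R] _).2 (mpow u (g - 1)).
have le : (\int[lebesgue_measure]_(s in `[a, u]) (h s)%:E <= (powR (u - a) g / g)%:E)%E.
  rewrite -key // -!integral_itv_bndo_bndc; last 2 first.
  - exact: measurable_funS mpE.
  - exact: measurable_funS mhE.
  apply: ge0_le_integral => //.
  - by move=> s _; rewrite lee_fin.
  - exact: measurable_funS mhE.
  - exact: measurable_funS mpE.
  - by move=> s /=; rewrite in_itv /= => /andP[hs su]; rewrite lee_fin hle.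
have i0 : (0 <= \int[lebesgue_measure]_(s in `[a, u]) (h s)%:E)%E.
  by apply: integral_ge0 => s _; rewrite lee_fin.
rewrite /Rintegral -lee_fin fineK //.
by rewrite ge0_fin_numE // (le_lt_trans le) ?ltry.
Qed.

Lemma eqI (a u al be : R) : 0 < al + be - 1 -> a <= u ->
  \int[lebesgue_measure]_(s in `[a, u]) (powR (u - s) (be - 1) * powR (u - s) (al - 1))
  = powR (u - a) (al + be - 1) / (al + be - 1).
Proof.
move=> g0 au.
have mpE q := (measurable_EFinP [set: R] _).2 (mpow u q).
have mh : measurable_fun setT (fun s : R => powR (u - s) (be - 1) * powR (u - s) (al - 1)).
  by apply: measurable_funM; exact: mpow.
have mhE := (measurable_EFinP [set: R] _).2 mh.
rewrite /Rintegral.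
have -> : (\int[lebesgue_measure]_(s in `[a, u])
            (powR (u - s) (be - 1) * powR (u - s) (al - 1))%:E =
           \int[lebesgue_measure]_(s in `[a, u]) (powR (u - s) (al + be - 1 - 1))%:E)%E.
  rewrite -!integral_itv_bndo_bndc; last 2 first.
  - exact: measurable_funS (mpE _).
  - exact: measurable_funS mhE.
  apply: eq_integral => s; rewrite inE /= in_itv /= => /andP[_ su].
  rewrite powR_mulD ?subr_gt0 //; congr (powR _ _)%:E; ring.
by rewrite key.
Qed.

End K.

Theorem lemma3 (R : realType) (a b alpha beta : R) :
  a < b ->
  0 < alpha -> alpha <= 1 -> 0 < beta -> beta <= 1 ->
  1 < alpha + beta -> alpha + beta <= 2 ->
  (* (1) *)
  (forall t r, a <= r -> r <= t -> t <= b -> 0 <= Gker a alpha beta t r) /\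
  (* (2) max_{t in [a,b]} G(t,r) = G(r,r) *)
  (forall r, a <= r -> r <= b ->
     forall t, a <= t -> t <= b ->
       Gker a alpha beta t r <= Gker a alpha beta r r) /\
  (* (3) max_{r in [a,b]} G(r,r) = (b-a)^(alpha+beta-1) / ((alpha+beta-1) Gamma(alpha) Gamma(beta)) *)
  ((forall r, a <= r -> r <= b ->
      Gker a alpha beta r r <=
        powR (b - a) (alpha + beta - 1) /
          ((alpha + beta - 1) * Gamma alpha * Gamma beta)) /\
   (exists2 r, a <= r <= b &
      Gker a alpha beta r r =
        powR (b - a) (alpha + beta - 1) /
          ((alpha + beta - 1) * Gamma alpha * Gamma beta))).
Proof.
move=> ab a0 a1 b0 b1 ab1 ab2.
have g0 : 0 < alpha + beta - 1 by rewrite subr_gt0.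
set g := alpha + beta - 1 in g0 *.
set c := (Gamma alpha * Gamma beta)^-1.
have Gge0 x : 0 <= @Gamma R x.
  by apply: Rintegral_ge0 => t _; rewrite mulr_ge0 ?powR_ge0 ?expR_ge0.
have c0 : 0 <= c by rewrite /c invr_ge0 mulr_ge0.
have Grr r : a <= r -> Gker a alpha beta r r = c * (powR (r - a) g / g).
  by move=> ar; rewrite /Gker -/c lexx eqI.
have key2 r : a <= r -> r <= b ->
    c * (powR (r - a) g / g) <= c * (powR (b - a) g / g).
  move=> ar rb; apply: ler_wpM2l => //; apply: ler_wpM2r; first by rewrite invr_ge0 ltW.
  apply: ge0_ler_powR; first exact: ltW.
  - by rewrite nnegrE subr_ge0.
  - by rewrite nnegrE subr_ge0 (le_trans ar rb).
  - by rewrite lerD2r.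
have rhsE : powR (b - a) g / (g * Gamma alpha * Gamma beta) = c * (powR (b - a) g / g).
  by rewrite /c !invfM; ring.
have mh t r : measurable_fun setT
    (fun s : R => powR (t - s) (beta - 1) * powR (r - s) (alpha - 1)).
  by apply: measurable_funM; exact: mpow.
have hge0 t r s : 0 <= powR (t - s) (beta - 1) * powR (r - s) (alpha - 1).
  by rewrite mulr_ge0 ?powR_ge0.
have gE : g - 1 = (beta - 1) + (alpha - 1) by rewrite /g; ring.
split; [|split; [|split]].
- move=> t r ar rt tb; rewrite /Gker; apply: mulr_ge0 => //.
  by case: ifP => _; apply: Rintegral_ge0 => s _.
- move=> r ar rb t hat tb; rewrite Grr // /Gker -/c; apply: ler_wpM2l => //.
  case: ifPn => [rt|].
  + apply: cmpI => // s hs sr.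
    rewrite gE -(@powR_mulD _ (r - s) (beta - 1) (alpha - 1)) ?subr_gt0 //.
    apply: ler_wpM2r; first exact: powR_ge0.
    apply: powR_anti; rewrite ?subr_gt0 ?lerB // subr_le0 //.
  + rewrite -ltNge => tr.
    apply: (le_trans (@cmpI _ a t g _ g0 hat (mh t r) (hge0 t r) _)).
      move=> s hs st; rewrite gE -(@powR_mulD _ (t - s) (beta - 1) (alpha - 1)) ?subr_gt0 //.
      apply: ler_wpM2l; first exact: powR_ge0.
      apply: powR_anti; rewrite ?subr_gt0 ?lerB ?(ltW tr) // subr_le0 //.
    apply: ler_wpM2r; first by rewrite invr_ge0 ltW.
    apply: ge0_ler_powR; first exact: ltW.
    - by rewrite nnegrE subr_ge0.
    - by rewrite nnegrE subr_ge0.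
    - by rewrite lerD2r ltW.
- by move=> r ar rb; rewrite Grr // rhsE; exact: key2.
- by exists b; [rewrite lexx ltW | rewrite Grr ?ltW // rhsE].
Qed.
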